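(* Suppose $N$ carries a graded complementation and $X$ is a Macaulay basis of $M$. Then for every $m\in N$ there is exactly one $m'\in N$ such that $m\Rightarrow_X^* m'$ and $m'$ is reduced with respect to $\Rightarrow_X$. Moreover this $m'$ satisfies $m'_b\in N_b\ominus W_b(X)$ for every $b\in B$.
   Context: Standing setup. $\mathbf{k}$ is a field. $(A,+,0)$ is a finitely generated, cancellative commutative monoid with a total order $\le$ which is a well-order, such that $0<a$ for every $a\neq0$ and $a\le a'$ implies $a+c\le a'+c$. $R=\bigoplus_{a\in A}R_a$ is a commutative Noetherian $\mathbf{k}$-algebra graded by $A$. $B$ is a well-ordered totally ordered set with an action $(a,b)\mapsto a\cdot b$ of $A$ such that $0\cdot b=b$, $(a+a')\cdot b=a\cdot(a'\cdot b)$, monotone and cancellative in each argument. $N=\bigoplus_{b\in B}N_b$ is a Noetherian $R$-module graded by $B$ ($R_aN_b\subseteq N_{a\cdot b}$), $M\subseteq N$ an $R$-submodule. For $m=\sum_b m_b\ne0$: $\deg m=\max\{b:m_b\ne0\}$, $\operatorname{lf}(m)=m_{\deg m}$; homogeneous means lying in one graded piece (also for $R$). A finite set $X=\{m_1,\dots,m_n\}$ of nonzero elements of $M$ is a Macaulay basis of $M$ if the $R$-submodule generated by $\{\operatorname{lf}(p):0\ne p\in M\}$ equals that generated by $\operatorname{lf}(m_1),\dots,\operatorname{lf}(m_n)$. $W_b(X)=\operatorname{span}_{\mathbf{k}}\{r\operatorname{lf}(x): x\in X,\ r\in R\text{ homogeneous},\ r\operatorname{lf}(x)\in N_b\}\subseteq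 N_b$. A graded complementation on $N$ assigns to each $b$ and each subspace $W\le N_b$ a subspace $W^c\le N_b$ with $W\oplus W^c=N_b$; $U\ominus W:=U\cap W^c$. Relation: $m\Rightarrow_X m'$ iff $\{b: m_b\notin W_b(X)^c\}$ is nonempty with maximum $b$, and $m'=m-\sum_j r_jx_j$ with $x_j\in X$, $r_j\in R$ homogeneous, $r_j\operatorname{lf}(x_j)\in N_b$, and $m_b-\sum_j r_j\operatorname{lf}(x_j)\in W_b(X)^c$. $\Rightarrow_X^*$ is the reflexive–transitive closure; $m$ is reduced w.r.t. $\Rightarrow_X$ if no $m'$ satisfies $m\Rightarrow_X m'$. *)

(* Defs.v *)
From HB Require Import structures.
From mathcomp Require Import all_boot all_order all_algebra.
From Stdlib Require List.
Set Implicit Arguments.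
Unset Strict Implicit.
Unset Printing Implicit Defensive.
Import GRing.Theory.
Local Open Scope ring_scope.

Record well_order (T : Type) (le : T -> T -> Prop) : Prop := {
  wo_refl : forall x, le x x;
  wo_antisym : forall x y, le x y -> le y x -> x = y;
  wo_trans : forall x y z, le x y -> le y z -> le x z;
  wo_total : forall x y, le x y \/ le y x;
  wo_min : forall P : T -> Prop, (exists x, P x) ->
           exists x, P x /\ forall y, P y -> le x y }.

Record ordered_monoid (A : Type) (add : A -> A -> A) (zero : A)
    (le : A -> A -> Prop) : Prop := {
  om_assoc : forall a b c, add a (add b c) = add (add a b) c;
  om_comm : forall a b, add a b = add b a;
  om_zero : forall a, add zero a = a;
  om_cancel : forall a b c, add a c = add b c -> a = b;
  om_fingen : exists gens : seq A, forall a, exists s : seq A,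
      (forall g, List.In g s -> List.In g gens) /\ a = foldr add zero s;
  om_wo : well_order le;
  om_pos : forall a, a <> zero -> le zero a /\ zero <> a;
  om_mono : forall a a' c, le a a' -> le (add a c) (add a' c) }.

Record ordered_action (A B : Type) (add : A -> A -> A) (zero : A)
    (leA : A -> A -> Prop) (leB : B -> B -> Prop) (act : A -> B -> B) : Prop := {
  oa_wo : well_order leB;
  oa_zero : forall b, act zero b = b;
  oa_add : forall a a' b, act (add a a') b = act a (act a' b);
  oa_mono_l : forall a a' b, leA a a' -> leB (act a b) (act a' b);
  oa_mono_r : forall a b b', leB b b' -> leB (act a b) (act a b');
  oa_cancel_l : forall a a' b, act a b = act a' b -> a = a';
  oa_cancel_r : forall a b b', act a b = act a b' -> b = b' }.

Definition rspan (R : nzRingType) (V : lmodType R) (S : V -> Prop) (v : V) : Prop :=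
  exists s : seq (R * V), (forall p, List.In p s -> S p.2) /\
                          v = \sum_(p <- s) p.1 *: p.2.

Definition submodule (R : nzRingType) (V : lmodType R) (P : V -> Prop) : Prop :=
  P 0 /\ (forall u v, P u -> P v -> P (u + v)) /\
  (forall (r : R) v, P v -> P (r *: v)).

Definition noetherian (R : nzRingType) (V : lmodType R) : Prop :=
  forall P : V -> Prop, submodule P ->
    exists s : seq V, forall v, P v <-> rspan (fun w => List.In w s) v.

Definition kspan (k : fieldType) (R : comAlgType k) (V : lmodType R)
    (S : V -> Prop) (v : V) : Prop :=
  exists s : seq (k * V), (forall p, List.In p s -> S p.2) /\
                          v = \sum_(p <- s) (p.1%:A : R) *: p.2.

Definition ksubspace (k : fieldType) (R : comAlgType k) (V : lmodType R)
    (P : V -> Prop) : Prop :=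
  P 0 /\ (forall u v, P u -> P v -> P (u + v)) /\
  (forall (c : k) v, P v -> P ((c%:A : R) *: v)).

(* R = (+)_a R_a with R_a := {x | piR a x = x}, each R_a a k-subspace,
   R_a R_a' <= R_(a+a'). *)
Record ring_grading (k : fieldType) (R : comAlgType k) (A : Type)
    (add : A -> A -> A) (piR : A -> R -> R) : Prop := {
  rg_add : forall a x y, piR a (x + y) = piR a x + piR a y;
  rg_scale : forall a (c : k) x, piR a (c *: x) = c *: piR a x;
  rg_idem : forall a x, piR a (piR a x) = piR a x;
  rg_orth : forall a a' x, a <> a' -> piR a' (piR a x) = 0;
  rg_sum : forall x, exists s : seq A, List.NoDup s /\
      (forall a, piR a x <> 0 -> List.In a s) /\ x = \sum_(a <- s) piR a x;
  rg_mul : forall a a' x y, piR a x = x -> piR a' y = y ->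
      piR (add a a') (x * y) = x * y }.

(* N = (+)_b N_b with N_b := {v | piN b v = v}, each N_b a k-subspace,
   R_a N_b <= N_(a.b). *)
Record module_grading (k : fieldType) (R : comAlgType k) (A B : Type)
    (act : A -> B -> B) (piR : A -> R -> R) (N : lmodType R)
    (piN : B -> N -> N) : Prop := {
  mg_add : forall b u v, piN b (u + v) = piN b u + piN b v;
  mg_scale : forall b (c : k) v, piN b ((c%:A : R) *: v) = (c%:A : R) *: piN b v;
  mg_idem : forall b v, piN b (piN b v) = piN b v;
  mg_orth : forall b b' v, b <> b' -> piN b' (piN b v) = 0;
  mg_sum : forall v, exists s : seq B, List.NoDup s /\
      (forall b, piN b v <> 0 -> List.In b s) /\ v = \sum_(b <- s) piN b v;
  mg_mul : forall a b (r : R) v, piR a r = r -> piN b v = v ->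
      piN (act a b) (r *: v) = r *: v }.

Section Macaulay.
Variables (k : fieldType) (R : comAlgType k) (A B : Type).
Variable (leB : B -> B -> Prop).
Variable (piR : A -> R -> R).
Variables (N : lmodType R) (piN : B -> N -> N).

Definition homogR (r : R) : Prop := exists a, piR a r = r.

Definition is_deg (m : N) (b : B) : Prop :=
  piN b m <> 0 /\ forall b', piN b' m <> 0 -> leB b' b.

Definition is_lf (m l : N) : Prop := exists b, is_deg m b /\ l = piN b m.

Definition in_piece (b : B) (v : N) : Prop := piN b v = v.

Definition graded_complementation (cmp : B -> (N -> Prop) -> N -> Prop) : Prop :=
  forall b (W : N -> Prop), ksubspace W -> (forall v, W v -> in_piece b v) ->
    [/\ ksubspace (cmp b W), (forall v, cmp b W v -> in_piece b v),
        (forall v, W v -> cmp b W v -> v = 0) &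
        (forall v, in_piece b v -> exists w w', W w /\ cmp b W w' /\ v = w + w')].

Definition macaulay_basis (M : N -> Prop) (X : seq N) : Prop :=
  (forall x, List.In x X -> M x /\ x <> 0) /\
  (forall v, rspan (fun w => exists p, M p /\ p <> 0 /\ is_lf p w) v <->
             rspan (fun w => exists x, List.In x X /\ is_lf x w) v).

Definition Wgen (X : seq N) (b : B) (w : N) : Prop :=
  exists (x : N) (r : R) (l : N), List.In x X /\ homogR r /\ is_lf x l /\
    w = r *: l /\ in_piece b w.

Definition W (X : seq N) (b : B) : N -> Prop := kspan (Wgen X b).

Variable cmp : B -> (N -> Prop) -> N -> Prop.

Definition Wc (X : seq N) (b : B) : N -> Prop := cmp b (W X b).

Definition red_step (X : seq N) (m m' : N) : Prop :=
  exists b, ~ Wc X b (piN b m) /\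
    (forall b', ~ Wc X b' (piN b' m) -> leB b' b) /\
    exists s : seq (R * N * N),
      (forall p, List.In p s ->
         List.In p.1.2 X /\ homogR p.1.1 /\ is_lf p.1.2 p.2 /\
         in_piece b (p.1.1 *: p.2)) /\
      m' = m - \sum_(p <- s) p.1.1 *: p.1.2 /\
      Wc X b (piN b m - \sum_(p <- s) p.1.1 *: p.2).

Definition reduced (X : seq N) (m : N) : Prop := ~ exists m', red_step X m m'.

End Macaulay.

Inductive rtc (T : Type) (rel : T -> T -> Prop) : T -> T -> Prop :=
| rtc_refl : forall x, rtc rel x x
| rtc_step : forall x y z, rel x y -> rtc rel y z -> rtc rel x z.

(* Main.v *)
Require Import Defs.
From HB Require Import structures.
From mathcomp Require Import all_boot all_order all_algebra.
From Stdlib Require Import Classical.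
Local Open Scope ring_scope.
Import GRing.Theory.

Section Proof.
Variables (k : fieldType) (R : comAlgType k) (A B : Type).
Variables (addA : A -> A -> A) (leB : B -> B -> Prop) (act : A -> B -> B).
Variable (piR : A -> R -> R).
Variables (N : lmodType R) (piN : B -> N -> N).
Variable cmp : B -> (N -> Prop) -> N -> Prop.
Variables (M : N -> Prop) (X : seq N).
Hypothesis HR : ring_grading addA piR.
Hypothesis HN : module_grading act piR piN.
Hypothesis HwoB : well_order leB.
Hypothesis Hcan : forall a b b', act a b = act a b' -> b = b'.
Hypothesis Hmono : forall a b b', leB b b' -> leB (act a b) (act a b').
Hypothesis HM : submodule M.
Hypothesis Hcmp : graded_complementation piN cmp.
Hypothesis HX : macaulay_basis leB piN M X.

Lemma piND b u v : piN b (u + v) = piN b u + piN b v.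
Proof. exact: (mg_add HN). Qed.

Lemma piN0 b : piN b 0 = 0.
Proof.
have := mg_add HN b 0 0; rewrite addr0 => /eqP.
by rewrite -subr_eq subrr eq_sym => /eqP.
Qed.

Lemma piNN b v : piN b (- v) = - piN b v.
Proof.
apply/eqP; rewrite -subr_eq0 opprK -piND addNr; exact/eqP/piN0.
Qed.

Lemma piNB b u v : piN b (u - v) = piN b u - piN b v.
Proof. by rewrite piND piNN. Qed.

Lemma piN_sum (I : Type) b (s : seq I) (F : I -> N) :
  piN b (\sum_(i <- s) F i) = \sum_(i <- s) piN b (F i).
Proof.
elim: s => [|x s IH]; first by rewrite !big_nil piN0.
by rewrite !big_cons piND IH.
Qed.

Lemma ksub_sub (P : N -> Prop) : ksubspace P -> forall u v, P u -> P v -> P (u - v).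
Proof.
move=> [H0 [HD HZ]] u v Pu Pv; apply: HD => //.
have := HZ (-1) v Pv; by rewrite scaleNr scale1r scaleN1r.
Qed.

Lemma ksub_sum (I : Type) (P : N -> Prop) (s : seq I) (F : I -> N) :
  ksubspace P -> (forall i, List.In i s -> P (F i)) -> P (\sum_(i <- s) F i).
Proof.
move=> [H0 [HD HZ]]; elim: s => [|x s IH] H; first by rewrite big_nil.
rewrite big_cons; apply: HD; first by apply: H; left.
by apply: IH => i Hi; apply: H; right.
Qed.

Lemma kspan_ksub (S : N -> Prop) : ksubspace (kspan S).
Proof.
split; first by exists [::]; split => //; rewrite big_nil.
split.
  move=> u v [s [Hs ->]] [t [Ht ->]]; exists (s ++ t); split; last by rewrite big_cat.
  move=> p Hp; case: (List.in_app_or _ _ _ Hp) => ?; [exact: Hs|exact: Ht].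
move=> c v [s [Hs ->]]; exists [seq (c * p.1, p.2) | p <- s]; split.
  move=> p Hp; have [q [<- Hq]] := proj1 (List.in_map_iff _ _ _) Hp; exact: (Hs q Hq).
rewrite big_map scaler_sumr; apply: eq_bigr => p _.
rewrite /= scalerA; congr (_ *: _); by rewrite mulr_algl scalerA.
Qed.

Lemma kspan_gen (S : N -> Prop) v : S v -> kspan S v.
Proof.
move=> Sv; exists [:: (1, v)]; split; first by move=> p [<-|[]].
by rewrite big_cons big_nil addr0 /= scale1r scale1r.
Qed.


Lemma piece_ksub b : ksubspace (in_piece piN b).
Proof.
rewrite /in_piece; split; first exact: piN0.
split; first by move=> u v Hu Hv; rewrite piND Hu Hv.
by move=> c v Hv; rewrite (mg_scale HN) Hv.
Qed.

Lemma kspan_piece b (S : N -> Prop) v :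
  (forall w, S w -> in_piece piN b w) -> kspan S v -> in_piece piN b v.
Proof.
move=> HS [s [Hs ->]]; apply: ksub_sum; first exact: piece_ksub.
move=> p Hp; have [_ [_ HZ]] := piece_ksub b; apply: HZ; exact: HS (Hs p Hp).
Qed.

Notation WW := (W leB piR piN X).
Notation WcB := (Wc leB piR piN cmp X).

Lemma W_ksub b : ksubspace (WW b).
Proof. exact: kspan_ksub. Qed.

Lemma W_piece b v : WW b v -> in_piece piN b v.
Proof.
apply: kspan_piece => w [x [r [l [_ [_ [_ [_ H]]]]]]]; exact: H.
Qed.

Lemma Wc_props b :
  [/\ ksubspace (WcB b), (forall v, WcB b v -> in_piece piN b v),
      (forall v, WW b v -> WcB b v -> v = 0) &
      (forall v, in_piece piN b v -> exists w w', WW b w /\ WcB b w' /\ v = w + w')].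
Proof. have H := @Hcmp b (WW b) (W_ksub b) (@W_piece b). exact: H. Qed.

Lemma Wc0 b : WcB b 0.
Proof. by case: (Wc_props b) => [[]]. Qed.

Lemma exists_max (s : seq B) : forall (P : B -> Prop),
  (forall b, P b -> List.In b s) -> (exists b, P b) ->
  exists b, P b /\ forall b', P b' -> leB b' b.
Proof.
elim: s => [|x s IH] P HP [b0 Pb0]; first by case: (HP _ Pb0).
case: (classic (exists b, P b /\ b <> x)) => [HQ|HnQ].
  have [|bq [[Pbq nbq] Hbq]] := IH (fun b => P b /\ b <> x) _ HQ.
    by move=> b [Pb nb]; case: (HP _ Pb) => // Hx; case: nb.
  case: (classic (P x)) => Px.
    case: (wo_total HwoB x bq) => Hle.
      exists bq; split => // b' Pb'; case: (classic (b' = x)) => [->//|nb'].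
      exact: Hbq.
    exists x; split => // b' Pb'; case: (classic (b' = x)) => [->|nb'].
      exact: (wo_refl HwoB).
    exact: (wo_trans HwoB (Hbq _ (conj Pb' nb')) Hle).
  exists bq; split => // b' Pb'; apply: Hbq; split => // E; by subst.
have Hx : forall b, P b -> b = x.
  move=> b Pb; apply: NNPP => nb; apply: HnQ; by exists b.
exists x; split; first by rewrite -(Hx _ Pb0).
by move=> b' /Hx ->; exact: (wo_refl HwoB).
Qed.

Lemma support v : exists s : seq B, forall b, piN b v <> 0 -> List.In b s.
Proof. by have [s [_ [H _]]] := mg_sum HN v; exists s. Qed.


Lemma piR0 a : piR a 0 = 0.
Proof.
have := rg_add HR a 0 0; rewrite addr0 => /eqP.
by rewrite -subr_eq subrr eq_sym => /eqP.
Qed.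

Lemma supp_scale a r y b' : piR a r = r -> piN b' (r *: y) <> 0 ->
  exists c, piN c y <> 0 /\ b' = act a c.
Proof.
move=> Hr Hne; apply: NNPP => Hno; apply: Hne.
have [s [_ [_ ->]]] := mg_sum HN y.
rewrite scaler_sumr piN_sum big1 // => c _.
have Hv : piN (act a c) (r *: piN c y) = r *: piN c y.
  by apply: (mg_mul HN) => //; exact: (mg_idem HN).
case: (classic (b' = act a c)) => [E|nE].
  rewrite E Hv; case: (classic (piN c y = 0)) => [->|nz]; first by rewrite scaler0.
  by case: Hno; exists c.
by rewrite -Hv (mg_orth HN) // => E; apply: nE.
Qed.

Lemma term_good b x a r l : piR a r = r -> is_lf leB piN x l ->
  in_piece piN b (r *: l) -> r *: l <> 0 ->
  piN b (r *: x) = r *: l /\ (forall b', piN b' (r *: x) <> 0 -> leB b' b).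
Proof.
move=> Hr [d [[Hd0 Hdmax] El]] Hp Hnz.
have Hpl : piN (act a d) (r *: l) = r *: l.
  by apply: (mg_mul HN) => //; rewrite El; exact: (mg_idem HN).
have Eb : act a d = b.
  apply: NNPP => nE; apply: Hnz; rewrite -Hp -Hpl (mg_orth HN) //.
have Ex : r *: x = r *: l + r *: (x - l) by rewrite -scalerDr addrC subrK.
split.
  rewrite Ex piND Hp; suff -> : piN b (r *: (x - l)) = 0 by rewrite addr0.
  apply: NNPP => Hne; have [c [Hc Ec]] := supp_scale _ _ _ _ Hr Hne.
  move: Ec; rewrite -Eb => /Hcan Ec; subst c; apply: Hc.
  by rewrite piNB El (mg_idem HN) subrr.
move=> b' Hne; have [c [Hc Ec]] := supp_scale _ _ _ _ Hr Hne.
rewrite Ec -Eb; apply: Hmono; exact: Hdmax.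
Qed.

Lemma term_exists b (c : k) v :
  Wgen leB piR piN X b v -> exists p : R * N * N,
  [/\ (List.In p.1.2 X /\ homogR piR p.1.1 /\ is_lf leB piN p.1.2 p.2 /\ in_piece piN b (p.1.1 *: p.2)),
      p.1.1 *: p.2 = (c%:A : R) *: v,
      piN b (p.1.1 *: p.1.2) = p.1.1 *: p.2 &
      (forall b', piN b' (p.1.1 *: p.1.2) <> 0 -> leB b' b)].
Proof.
move=> [x [r [l [Hx [[a Ha] [Hl [Ev Hp]]]]]]].
have E1 : (c%:A * r) *: l = (c%:A : R) *: v by rewrite Ev scalerA.
have Hp1 : in_piece piN b ((c%:A * r) *: l) by rewrite E1 /in_piece (mg_scale HN) Hp.
have Ha1 : piR a (c%:A * r) = c%:A * r by rewrite mulr_algl (rg_scale HR) Ha.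
case: (classic ((c%:A * r) *: l = 0)) => Hz.
  exists (0, x, l); split => /=.
  - split => //; split; first by exists a; exact: piR0.
    split => //; by rewrite /in_piece scale0r piN0.
  - by rewrite scale0r -E1 Hz.
  - by rewrite !scale0r piN0.
  - by move=> b'; rewrite scale0r piN0.
have [H1 H2] := term_good _ _ _ _ _ Ha1 Hl Hp1 Hz.
exists (c%:A * r, x, l); split => //=.
split => //; split => //; by exists a.
Qed.


Lemma build b (s : seq (k * N)) :
  (forall p, List.In p s -> Wgen leB piR piN X b p.2) ->
  exists t : seq (R * N * N),
  [/\ (forall p, List.In p t -> List.In p.1.2 X /\ homogR piR p.1.1 /\ is_lf leB piN p.1.2 p.2 /\ in_piece piN b (p.1.1 *: p.2)),
      \sum_(p <- t) p.1.1 *: p.2 = \sum_(p <- s) (p.1%:A : R) *: p.2,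
      piN b (\sum_(p <- t) p.1.1 *: p.1.2) = \sum_(p <- t) p.1.1 *: p.2 &
      (forall b', piN b' (\sum_(p <- t) p.1.1 *: p.1.2) <> 0 -> leB b' b)].
Proof.
elim: s => [|q s IH] Hs.
  exists [::]; split; [by [] | by rewrite !big_nil | by rewrite !big_nil piN0 |].
  by move=> b'; rewrite big_nil piN0.
have [|t [Ht1 Ht2 Ht3 Ht4]] := IH; first by move=> p Hp; apply: Hs; right.
have [p [Hp1 Hp2 Hp3 Hp4]] := term_exists b q.1 q.2 (Hs q (or_introl erefl)).
exists (p :: t); split.
- by move=> p' [<-|Hp']; [exact: Hp1|exact: Ht1].
- by rewrite !big_cons Hp2 Ht2.
- by rewrite !big_cons piND Hp3 Ht3.
- move=> b'; rewrite big_cons piND => Hne.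
  case: (classic (piN b' (p.1.1 *: p.1.2) = 0)) => Hz.
    by apply: Ht4 => E; apply: Hne; rewrite Hz E addr0.
  exact: Hp4.
Qed.

Lemma step_exists m b : ~ WcB b (piN b m) ->
  (forall b', ~ WcB b' (piN b' m) -> leB b' b) ->
  exists m', red_step leB piR piN cmp X m m' /\ forall b', ~ WcB b' (piN b' m') -> leB b' b /\ b' <> b.
Proof.
move=> Hbad Hmax.
have [_ _ _ Hdec] := Wc_props b.
have [w [w' [[s [Hs Ew]] [Hw' Em]]]] := Hdec (piN b m) ((mg_idem HN) b m).
have [t [Ht1 Ht2 Ht3 Ht4]] := build b s Hs.
have Hrest : piN b m - \sum_(p <- t) p.1.1 *: p.2 = w'.
  by rewrite Ht2 -Ew Em addrC addKr.
exists (m - \sum_(p <- t) p.1.1 *: p.1.2); split.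
  exists b; split => //; split => //; exists t; split => //; split => //.
  by rewrite Hrest.
move=> b' Hb'; case: (classic (leB b' b)) => Hle.
  split => // E; subst b'; apply: Hb'; by rewrite piNB Ht3 Hrest.
exfalso; apply: (Hle); apply: Hmax => Hc; apply: Hb'.
rewrite piNB; case: (classic (piN b' (\sum_(p <- t) p.1.1 *: p.1.2) = 0)) => [->|Hne].
  by rewrite subr0.
by case: Hle; exact: (Ht4 b' Hne).
Qed.

Lemma bad_max m : (exists b, ~ WcB b (piN b m)) ->
  exists b, ~ WcB b (piN b m) /\ forall b', ~ WcB b' (piN b' m) -> leB b' b.
Proof.
move=> Hex; have [s Hs] := support m.
apply: (exists_max s) => // b Hb; apply: Hs => E; apply: Hb; rewrite E; exact: Wc0.
Qed.

Lemma good_reduced m : (forall b, WcB b (piN b m)) -> reduced leB piR piN cmp X m.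
Proof. by move=> H [m' [b [Hb _]]]; apply: Hb. Qed.

Lemma reduced_good m : reduced leB piR piN cmp X m -> forall b, WcB b (piN b m).
Proof.
move=> Hr b; apply: NNPP => Hb.
have [b0 [Hb0 Hmax]] := bad_max m (ex_intro _ b Hb).
have [m' [Hst _]] := step_exists _ _ Hb0 Hmax.
by apply: Hr; exists m'.
Qed.

Definition rel := red_step leB piR piN cmp X.

Lemma exists_good m : exists m', rtc rel m m' /\ forall b, WcB b (piN b m').
Proof.
apply: NNPP => Hno.
pose P b := exists m, [/\ ~ WcB b (piN b m),
   (forall b', ~ WcB b' (piN b' m) -> leB b' b) &
   ~ exists m', rtc rel m m' /\ forall b, WcB b (piN b m')].
have HP : exists b, P b.
  case: (classic (exists b, ~ WcB b (piN b m))) => Hex.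
    have [b [Hb Hmax]] := bad_max _ Hex; exists b, m; split => //.
  case: Hno; exists m; split; first exact: rtc_refl.
  move=> b; apply: NNPP => Hb; apply: Hex; by exists b.
have [b0 [[m0 [Hb0 Hmax0 Hno0]] Hmin]] := wo_min HwoB HP.
have [m1 [Hst Hlt]] := step_exists _ _ Hb0 Hmax0.
case: (classic (exists b, ~ WcB b (piN b m1))) => Hex.
  have [b1 [Hb1 Hmax1]] := bad_max _ Hex.
  have [Hle1 Hne1] := Hlt _ Hb1.
  have Hle2 : leB b0 b1.
    apply: Hmin; exists m1; split => // [[m' [Hr Hg]]].
    apply: Hno0; exists m'; split => //; exact: rtc_step Hst Hr.
  by apply: Hne1; apply: (wo_antisym HwoB).
apply: Hno0; exists m1; split; first exact: rtc_step Hst (rtc_refl _ _).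
move=> b; apply: NNPP => Hb; apply: Hex; by exists b.
Qed.

Lemma M_sub u v : M u -> M v -> M (u - v).
Proof.
case: HM => _ [HD HZ] Hu Hv; apply: HD => //.
by have := HZ (-1) v Hv; rewrite scaleN1r.
Qed.

Lemma M_sum (I : Type) (s : seq I) (F : I -> N) :
  (forall i, List.In i s -> M (F i)) -> M (\sum_(i <- s) F i).
Proof.
case: HM => H0 [HD HZ]; elim: s => [|x s IH] H; first by rewrite big_nil.
rewrite big_cons; apply: HD; first by apply: H; left.
by apply: IH => i Hi; apply: H; right.
Qed.

Lemma rtc_M m m'' : rtc rel m m'' -> M (m - m'').
Proof.
elim => [x|x y z Hxy _ IH].
  by rewrite subrr; case: HM.
have -> : x - z = (x - y) + (y - z) by rewrite addrA subrK.
case: HM => _ [HD _]; apply: HD => //.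
have [b [_ [_ [s [Hs [-> _]]]]]] := Hxy.
rewrite opprB addrC subrK; apply: M_sum => p Hp.
case: HM => _ [_ HZ]; apply: HZ.
have [Hx _] := Hs p Hp; exact: (proj1 (proj1 HX _ Hx)).
Qed.
Lemma term_W d r w : (exists x, List.In x X /\ is_lf leB piN x w) ->
  WW d (piN d (r *: w)).
Proof.
move=> [x [Hx [e [He ->]]]].
have [s [_ [_ Er]]] := rg_sum HR r.
rewrite Er scaler_suml piN_sum; apply: ksub_sum; first exact: W_ksub.
move=> a _.
have Hv : piN (act a e) (piR a r *: piN e x) = piR a r *: piN e x.
  by apply: (mg_mul HN); [exact: (rg_idem HR)|exact: (mg_idem HN)].
case: (classic (act a e = d)) => E.
  rewrite -E Hv; apply: kspan_gen.
  exists x, (piR a r), (piN e x); split => //; split; first by exists a; exact: (rg_idem HR).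
  split; first by exists e.
  by split.
rewrite -Hv (mg_orth HN) //; by case: (W_ksub d).
Qed.

Lemma zero_of_good p : M p -> (forall b, WcB b (piN b p)) -> p = 0.
Proof.
move=> HMp Hg; apply: NNPP => Hp.
have Hex : exists b, piN b p <> 0.
  apply: NNPP => Hn; apply: Hp.
  have [s [_ [_ ->]]] := mg_sum HN p.
  rewrite big1 // => b _; apply: NNPP => Hb; apply: Hn; by exists b.
have [s Hs] := support p.
have [d [Hd Hdmax]] := exists_max s _ Hs Hex.
have Hgen : rspan (fun w => exists q, M q /\ q <> 0 /\ is_lf leB piN q w) (piN d p).
  exists [:: (1, piN d p)]; split.
    move=> q [<-|[]]; exists p; split => //; split => //; exists d; split => //.
  by rewrite big_cons big_nil addr0 scale1r.
have [u [Hu Eu]] := proj1 (proj2 HX (piN d p)) Hgen.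
have HW : WW d (piN d p).
  rewrite -(mg_idem HN) Eu piN_sum; apply: ksub_sum; first exact: W_ksub.
  move=> q Hq; exact: term_W (Hu q Hq).
have [_ _ Hint _] := Wc_props d.
by apply: Hd; apply: Hint.
Qed.

Lemma main_sec m : exists m' : N,
    (rtc (red_step leB piR piN cmp X) m m' /\ reduced leB piR piN cmp X m') /\
    (forall m'', rtc (red_step leB piR piN cmp X) m m'' ->
                 reduced leB piR piN cmp X m'' -> m'' = m') /\
    (forall b, in_piece piN b (piN b m') /\ Wc leB piR piN cmp X b (piN b m')).
Proof.
have [m' [Hrt Hg]] := exists_good m.
exists m'; split; first by split => //; exact: good_reduced.
split; last first.
  move=> b; split; [exact: (mg_idem HN) | exact: Hg].
move=> m'' Hrt'' Hred''.
have Hg'' := reduced_good m'' Hred''.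
have HMd : M (m'' - m').
  have := M_sub _ _ (rtc_M _ _ Hrt) (rtc_M _ _ Hrt'').
  by rewrite opprB addrC addrA subrK.
apply/eqP; rewrite -subr_eq0; apply/eqP.
apply: (zero_of_good _ HMd) => b.
rewrite piNB.
have [Hks _ _ _] := Wc_props b.
exact: ksub_sub Hks _ _ (Hg'' b) (Hg b).
Qed.

End Proof.

Theorem mainTheorem4
  (k : fieldType) (R : comAlgType k)
  (A : Type) (addA : A -> A -> A) (zeroA : A) (leA : A -> A -> Prop)
  (HA : ordered_monoid addA zeroA leA)
  (piR : A -> R -> R) (HR : ring_grading addA piR) (HRnoeth : noetherian R^o)
  (B : Type) (leB : B -> B -> Prop) (act : A -> B -> B)
  (HB : ordered_action addA zeroA leA leB act)
  (N : lmodType R) (piN : B -> N -> N) (HN : module_grading act piR piN)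
  (HNnoeth : noetherian N)
  (M : N -> Prop) (HM : submodule M)
  (cmp : B -> (N -> Prop) -> N -> Prop)
  (Hcmp : graded_complementation piN cmp)
  (X : seq N) (HX : macaulay_basis leB piN M X) :
  forall m : N, exists m' : N,
    (rtc (red_step leB piR piN cmp X) m m' /\ reduced leB piR piN cmp X m') /\
    (forall m'', rtc (red_step leB piR piN cmp X) m m'' ->
                 reduced leB piR piN cmp X m'' -> m'' = m') /\
    (forall b, in_piece piN b (piN b m') /\ Wc leB piR piN cmp X b (piN b m')).
Proof.
move=> m.
exact: (@main_sec k R A B addA leB act piR N piN cmp M X HR HN (oa_wo HB)
          (oa_cancel_r HB) (oa_mono_r HB) HM Hcmp HX m).
Qed.
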